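(* SD-EFX allocations need not exist, even for additive valuations: consider $m=4$ items $\{1,2,3,4\}$ and $n=2$ agents with identical additive valuations $v(\{1\})=4$, $v(\{2\})=1+\epsilon$, $v(\{3\})=1$, $v(\{4\})=1-\epsilon$ for a small $\epsilon\in(0,1)$, so that both agents have the ordering $\pi=1\succ 2\succ 3\succ 4$. Then no allocation of the four items is SD-EFX with respect to $\pi_1=\pi_2=\pi$.
   Context: For an ordering $\pi$ (best to worst), $A\succeq^{\mathrm{sd}}_\pi B$ iff $|A|\ge|B|$ and for every $k\le|B|$ the $k$-th best item of $A$ under $\pi$ is ranked weakly above the $k$-th best item of $B$. An allocation $(A_1,A_2)$ is a partition of all items; it is SD-EFX if for all agents $i,j$ with $A_j\neq\emptyset$ and all $g\in A_j$, $A_i\succeq^{\mathrm{sd}}_{\pi_i}A_j\setminus\{g\}$. *)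

(* Defs.v *)
From mathcomp Require Import all_boot all_order all_algebra.
Set Implicit Arguments. Unset Strict Implicit. Unset Printing Implicit Defensive.
Import Order.TTheory GRing.Theory Num.Theory.

(* The rank of x is its position [index x pi]
   (0 = best); "x ranked weakly above y" means index x pi <= index y pi. *)
Definition is_ordering (T : finType) (pi : seq T) : Prop :=
  perm_eq pi (enum T).

(* The items of A listed best-to-worst under pi; its k-th entry is the
   (k+1)-th best item of A. *)
Definition ranked (T : finType) (pi : seq T) (A : {set T}) : seq T :=
  [seq x <- pi | x \in A].

(* A >=^sd_pi B. The default d of nth is irrelevant since k < #|B| <= #|A|. *)
Definition sd_geq (T : finType) (pi : seq T) (A B : {set T}) : Prop :=
  #|B| <= #|A| /\
  forall (k : nat) (d : T), k < #|B| ->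
    index (nth d (ranked pi A) k) pi <= index (nth d (ranked pi B) k) pi.

Definition is_allocation (T : finType) (n : nat) (A : 'I_n -> {set T}) : Prop :=
  (forall i j : 'I_n, i != j -> [disjoint A i & A j]) /\
  \bigcup_(i < n) A i = [set: T].

Definition sd_efx (T : finType) (n : nat) (pis : 'I_n -> seq T)
    (A : 'I_n -> {set T}) : Prop :=
  forall i j : 'I_n, A j != set0 ->
    forall g, g \in A j -> sd_geq (pis i) (A i) (A j :\ g).

Definition ordering_of (R : realDomainType) (T : finType) (v : T -> R)
    (pi : seq T) : Prop :=
  is_ordering pi /\ sorted (fun a b => v b < v a)%R pi.

(* The valuation of the example: items 1,2,3,4 are the ordinals 0,1,2,3. *)
Definition v_ex (R : realFieldType) (eps : R) (x : 'I_4) : R :=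
  match val x with
  | 0 => 4%:R
  | 1 => 1 + eps
  | 2 => 1
  | _ => 1 - eps
  end%R.

(* Main.v *)
Require Import Defs.
From mathcomp Require Import all_boot all_order all_algebra.
From mathcomp Require Import lra.
Import Order.TTheory GRing.Theory Num.Theory.

Definition o0 : 'I_4 := @Ordinal 4 0 erefl.
Definition o1 : 'I_4 := @Ordinal 4 1 erefl.
Definition o2 : 'I_4 := @Ordinal 4 2 erefl.
Definition o3 : 'I_4 := @Ordinal 4 3 erefl.
Definition pi0 : seq 'I_4 := [:: o0; o1; o2; o3].

Lemma index_pi0 (x : 'I_4) : index x pi0 = val x.
Proof. by case: x => [[|[|[|[|]]]] //]. Qed.

Lemma core (P Q : {set 'I_4}) :
  (forall x, (x \in Q) = (x \notin P)) -> o0 \in P ->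
  (forall g, g \in P -> sd_geq pi0 Q (P :\ g)) ->
  (forall g, g \in Q -> sd_geq pi0 P (Q :\ g)) -> False.
Proof.
move=> hQ h0 hPQ hQP.
case: (boolP [exists h, (h \in P) && (h != o0)]).
  case/existsP=> h /andP[hP hne].
  have [_ H] := hPQ h hP.
  have hin : o0 \in P :\ h by rewrite !inE eq_sym hne h0.
  have hc : 0 < #|P :\ h| by apply/card_gt0P; exists o0.
  have := H 0 o3 hc.
  have -> : nth o3 (ranked pi0 (P :\ h)) 0 = o0 by rewrite /ranked /= hin.
  set x := nth o3 (ranked pi0 Q) 0.
  rewrite !index_pi0 /= leqn0.
  have : (x == o3) || (x \in Q).
    rewrite /x; case: (ltnP 0 (size (ranked pi0 Q))) => hs.
      by move: (mem_nth o3 hs); rewrite /ranked mem_filter => /andP[-> _]; rewrite orbT.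
    by rewrite nth_default.
  case/orP => [/eqP -> //|hx /eqP hv].
  have : x = o0 by apply: val_inj.
  by move=> E; move: hx; rewrite E hQ h0.
rewrite negb_exists => /forallP hall.
have EP : P = [set o0].
  apply/setP=> x; rewrite inE; case: (eqVneq x o0) => [->//|hx].
  by move: (hall x); rewrite hx andbT => /negbTE.
have hq : forall x, x != o0 -> x \in Q.
  by move=> x hx; rewrite hQ EP inE.
have [H _] := hQP o1 (hq o1 isT).
move: H; rewrite EP cards1.
have : [set o2; o3] \subset Q :\ o1.
  apply/subsetP=> x; rewrite !inE => /orP[] /eqP -> ; rewrite hq //.
move/subset_leq_card; rewrite cards2 /=.
by move=> a b; move: (leq_trans a b).
Qed.

Definition p0 : 'I_2 := @Ordinal 2 0 erefl.
Definition p1 : 'I_2 := @Ordinal 2 1 erefl.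

Theorem mainTheorem17 (R : realFieldType) (eps : R) :
  (0 < eps)%R -> (eps < 1)%R ->
  forall pi : seq 'I_4, ordering_of (v_ex eps) pi ->
  forall A : 'I_2 -> {set 'I_4}, is_allocation A ->
  ~ sd_efx (fun _ : 'I_2 => pi) A.
Proof.
move=> e0 e1 pi [hperm hsort] A [hdis hcov] hefx.
have Epi : pi = pi0.
  apply: (@sorted_eq _ (fun a b => v_ex eps b < v_ex eps a)%R).
  - move=> a b c hab hbc; exact: lt_trans hbc hab.
  - by move=> a b /andP[h1 h2]; move: (lt_trans h1 h2); rewrite ltxx.
  - exact: hsort.
  - rewrite /= /v_ex /=; apply/and4P; split => //; lra.
  - apply: perm_trans hperm _; apply: uniq_perm; rewrite ?enum_uniq //.
    move=> x; rewrite mem_enum; by case: x => [[|[|[|[|]]]] //].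
subst pi.
have hQ : forall x, (x \in A p1) = (x \notin A p0).
  move=> x.
  have dj := disjointFr (hdis p0 p1 isT).
  have : x \in \bigcup_(i < 2) A i by rewrite hcov inE.
  case/bigcupP=> i _; case: i => [[|[|//]] hi] hx.
    have -> : x \in A p0 by rewrite (_ : p0 = Ordinal hi) //; exact: val_inj.
    by rewrite /=; apply: dj; rewrite (_ : p0 = Ordinal hi) //; exact: val_inj.
  have h1 : x \in A p1 by rewrite (_ : p1 = Ordinal hi) //; exact: val_inj.
  rewrite h1; apply/esym/negP => /dj; by rewrite h1.
have ne : forall j g, g \in A j -> A j != set0.
  by move=> j g hg; apply/set0Pn; exists g.
case: (boolP (o0 \in A p0)) => h0.
  apply: (@core _ _ hQ h0).
    by move=> g hg; apply: (hefx p1 p0 (ne _ _ hg) g hg).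
  by move=> g hg; apply: (hefx p0 p1 (ne _ _ hg) g hg).
have hQ' : forall x, (x \in A p0) = (x \notin A p1).
  by move=> x; rewrite hQ negbK.
have h1 : o0 \in A p1 by rewrite hQ.
apply: (@core _ _ hQ' h1).
  by move=> g hg; apply: (hefx p0 p1 (ne _ _ hg) g hg).
by move=> g hg; apply: (hefx p1 p0 (ne _ _ hg) g hg).
Qed.
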